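(* There is a bijection between zero-dimensional tropical ideals of degree $2$ in $\mathbb{B}[x_1^{\pm1},\dots,x_n^{\pm1}]$ and proper sublattices $L\subsetneq\mathbb{Z}^n$. Under this bijection, the tropical ideal associated to $L$ is the one whose polynomials of minimal support are exactly the binomials $\mathbf x^{\mathbf u}\oplus\mathbf x^{\mathbf v}$ with $\mathbf u\neq\mathbf v$ and $\mathbf u-\mathbf v\in L$, and the trinomials $\mathbf x^{\mathbf u}\oplus\mathbf x^{\mathbf v}\oplus\mathbf x^{\mathbf w}$ with $\mathbf u,\mathbf v,\mathbf w$ distinct and no pairwise difference of $\mathbf u,\mathbf v,\mathbf w$ lying in $L$.
   Context: $\mathbb{B}=\{\infty,0\}$ with $\oplus=\min$ and multiplication $+$. For $f=\bigoplus c_{\mathbf u}\mathbf x^{\mathbf u}$, $\operatorname{supp}(f)=\{\mathbf u:c_{\mathbf u}\ne\infty\}$. An ideal $I\subset\mathbb{B}[x_1^{\pm1},\dots,x_n^{\pm1}]$ is a tropical ideal if for all $f,g\in I$ and $\mathbf u\in\operatorname{supp}(f)\cap\operatorname{supp}(g)$ there is $h\in I$ with $\operatorname{supp}(f)\Delta\operatorname{supp}(g)\subset\operatorname{supp}(h)\subset(\operatorname{supp}(f)\cup\operatorname{supp}(g))\setminus\{\mathbf u\}$. Its underlying matroid on $\mathbb{Z}^n$ has as independent sets those containing no support of a polynomial of $I$ (circuits = minimal supports). $I$ is zero-dimensional of degree $r$ iff this matroid has finite rank $r$ (equivalent to the Hilbert-polynomial definition). A polynomial of minimal support is one whose support is a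 circuit of the underlying matroid. *)

(* Defs.v *)
From HB Require Import structures.
From mathcomp Require Import all_boot all_order all_algebra.
From mathcomp Require Import finmap.
Set Implicit Arguments. Unset Strict Implicit. Unset Printing Implicit Defensive.
Import Order.TTheory GRing.Theory Num.Theory.
Local Open Scope ring_scope.
Local Open Scope fset_scope.

Definition Zn (n : nat) := 'rV[int]_n.

(* A Laurent polynomial over B = {oo, 0} is  f = (+)_{u in supp f} x^u,
   hence it is identified with its support, a finite subset of Z^n.
   The zero polynomial (constantly oo) is the empty set. *)
Definition bpoly (n : nat) := {fset Zn n}.

Definition badd n (f g : bpoly n) : bpoly n := f `|` g.
Definition bmul n (f g : bpoly n) : bpoly n := [fset (u + v)%R | u in f, v in g].

Definition is_ideal n (I : bpoly n -> Prop) : Prop :=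
  I fset0 /\
  (forall f g, I f -> I g -> I (badd f g)) /\
  (forall f g, I f -> I (bmul g f)).

Definition is_tropical_ideal n (I : bpoly n -> Prop) : Prop :=
  is_ideal I /\
  forall f g u, I f -> I g -> u \in f -> u \in g ->
    exists h, I h /\
      ((f `\` g) `|` (g `\` f)) `<=` h /\ h `<=` ((f `|` g) `\ u).

(* Independent (finite) sets of the underlying matroid: contain no
   support of a nonzero polynomial of I. *)
Definition indep n (I : bpoly n -> Prop) (S : {fset Zn n}) : Prop :=
  forall f, I f -> f != fset0 -> ~ (f `<=` S).

Definition matroid_rank n (I : bpoly n -> Prop) (r : nat) : Prop :=
  (exists S, indep I S /\ #|` S| = r) /\
  (forall S, indep I S -> (#|` S| <= r)%N).

Definition zero_dim_trop_ideal_deg n (I : bpoly n -> Prop) (r : nat) : Prop :=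
  is_tropical_ideal I /\ matroid_rank I r.

Definition min_support n (I : bpoly n -> Prop) (f : bpoly n) : Prop :=
  I f /\ f != fset0 /\
  forall g, I g -> g != fset0 -> g `<=` f -> g = f.

Definition is_sublattice n (L : Zn n -> Prop) : Prop :=
  L 0%R /\ forall u v, L u -> L v -> L (u - v)%R.

Definition is_proper_sublattice n (L : Zn n -> Prop) : Prop :=
  is_sublattice L /\ exists v, ~ L v.

Definition lattice_circuit n (L : Zn n -> Prop) (f : bpoly n) : Prop :=
  (exists u v : Zn n, u != v /\ L (u - v)%R /\ f = [fset u; v]) \/
  (exists u v w : Zn n, [/\ u != v, u != w & v != w] /\
     [/\ ~ L (u - v)%R, ~ L (u - w)%R & ~ L (v - w)%R] /\ f = [fset u; v; w]).

(* Main.v *)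
Require Import Defs.
From HB Require Import structures.
From mathcomp Require Import all_boot all_order all_algebra.
From mathcomp Require Import finmap zify.
From Stdlib Require Import Classical ClassicalEpsilon.
Set Implicit Arguments. Unset Strict Implicit. Unset Printing Implicit Defensive.
Import Order.TTheory GRing.Theory Num.Theory.
Local Open Scope fset_scope.
Local Open Scope ring_scope.



Lemma Lsym n (L : Zn n -> Prop) x y : is_sublattice L -> L (x - y) -> L (y - x).
Proof. move=> [L0 LB] h; have := LB _ _ L0 h; by rewrite sub0r opprB. Qed.

Lemma Ltr n (L : Zn n -> Prop) x y z : is_sublattice L -> L (x - y) -> L (y - z) -> L (x - z).
Proof.
move=> HL h1 h2; have h3 := Lsym HL h2; have := HL.2 _ _ h1 h3.
by rewrite opprB addrA subrK.
Qed.

Lemma Lneq n (L : Zn n -> Prop) x y : is_sublattice L -> ~ L (x - y) -> x != y.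
Proof. by move=> [L0 _] h; apply/eqP => e; apply: h; rewrite e subrr. Qed.

Lemma Lnsym n (L : Zn n -> Prop) x y : is_sublattice L -> ~ L (x - y) -> ~ L (y - x).
Proof. by move=> HL h1 h2; apply: h1; apply: Lsym. Qed.

Lemma Ltrans_sub n (a b c : Zn n) : (a + b) - (a + c) = b - c.
Proof. by rewrite opprD addrACA subrr add0r. Qed.

Definition good n (L : Zn n -> Prop) (S : bpoly n) (x : Zn n) : Prop :=
  (exists y, [/\ y \in S, y != x & L (x - y)]) \/
  (exists y z, [/\ y \in S, z \in S, ~ L (x - y), ~ L (x - z) & ~ L (y - z)]).

Definition PhiL n (L : Zn n -> Prop) (f : bpoly n) : Prop :=
  forall x, x \in f -> good L f x.

Lemma good_sub n (L : Zn n -> Prop) S T x : good L S x -> S `<=` T -> good L T x.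
Proof.
move=> [[y [yS yx Ly]]|[y [z [yS zS h1 h2 h3]]]] /fsubsetP ST.
  by left; exists y; split => //; apply: ST.
by right; exists y, z; split => //; apply: ST.
Qed.

Lemma mem_bmul n (f g : bpoly n) a b : a \in f -> b \in g -> a + b \in bmul f g.
Proof. by move=> af bg; apply: in_imfset2. Qed.

Lemma bmulP n (f g : bpoly n) t : t \in bmul f g -> exists a b, [/\ a \in f, b \in g & t = a + b].
Proof. by move=> /imfset2P [a af [b bg ->]]; exists a, b. Qed.

Lemma PhiL_ideal n (L : Zn n -> Prop) : is_ideal (PhiL L).
Proof.
split; first by move=> x; rewrite inE.
split.
  move=> f g Hf Hg x; rewrite /badd inE => /orP [xf|xg].
    by apply: good_sub (Hf x xf) _; apply: fsubsetUl.
  by apply: good_sub (Hg x xg) _; apply: fsubsetUr.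
move=> f g Hf t /bmulP [a [b [ag bf ->]]].
case: (Hf b bf) => [[y [yS yx Ly]]|[y [z [yS zS h1 h2 h3]]]].
  left; exists (a + y); split; first exact: mem_bmul.
    by apply: contra yx => /eqP /addrI ->.
  by rewrite Ltrans_sub.
right; exists (a + y), (a + z); split; try exact: mem_bmul; by rewrite Ltrans_sub.
Qed.

Lemma inS1 n (f g : bpoly n) u y : y \in f -> y != u -> y \in (f `|` g) `\ u.
Proof. by move=> yf yu; rewrite in_fsetD1 yu in_fsetU yf. Qed.
Lemma inS2 n (f g : bpoly n) u y : y \in g -> y != u -> y \in (f `|` g) `\ u.
Proof. by move=> yf yu; rewrite in_fsetD1 yu in_fsetU yf orbT. Qed.

Lemma neq_notin n (g : bpoly n) x y : x \notin g -> y \in g -> y != x.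
Proof. by move=> xg yg; apply: contraNneq xg => <-. Qed.

Lemma tri_case n (L : Zn n -> Prop) f g u x z : is_sublattice L -> PhiL L g ->
  u \in g -> x \notin g -> z \in f -> ~ L (x - u) -> ~ L (x - z) -> ~ L (u - z) ->
  good L ((f `|` g) `\ u) x.
Proof.
move=> HL Hg ug xg zf nxu nxz nuz.
have zu : z != u by rewrite eq_sym; apply: Lneq nuz.
case: (Hg u ug) => [[w [wg wu Luw]] | [v [w [vg wg m1 m2 m3]]]].
  right; exists z, w; split => //; [exact: inS1|exact: inS2| |].
    by move=> h; apply: nxu; apply: Ltr h (Lsym HL Luw).
  by move=> h; apply: nuz; apply: Ltr Luw (Lsym HL h).
have vu : v != u by rewrite eq_sym; apply: Lneq m1.
have wu : w != u by rewrite eq_sym; apply: Lneq m2.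
case: (classic (L (x - v))) => Lxv.
  by left; exists v; split => //; [exact: inS2|exact: neq_notin xg vg].
case: (classic (L (x - w))) => Lxw.
  by left; exists w; split => //; [exact: inS2|exact: neq_notin xg wg].
by right; exists v, w; split => //; exact: inS2.
Qed.

Lemma elim_key n (L : Zn n -> Prop) f g u x : is_sublattice L -> PhiL L f -> PhiL L g ->
  u \in f -> u \in g -> x \in f -> x \notin g -> good L ((f `|` g) `\ u) x.
Proof.
move=> HL Hf Hg uf ug xf xg.
have xu : x != u by apply: contraNneq xg => ->.
case: (Hf x xf) => [[y [yf yx Lxy]] | [y [z [yf zf n1 n2 n3]]]].
  case: (eqVneq y u) => [yu | yu]; last by left; exists y; split => //; exact: inS1.
  subst y.
  case: (Hg u ug) => [[z [zg zu Luz]] | [z [w [zg wg m1 m2 m3]]]].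
    left; exists z; split; [exact: inS2|exact: neq_notin xg zg|exact: Ltr Lxy Luz].
  have zu : z != u by rewrite eq_sym; apply: Lneq m1.
  have wu : w != u by rewrite eq_sym; apply: Lneq m2.
  right; exists z, w; split => //; try exact: inS2.
    by move=> h; apply: m1; apply: Ltr (Lsym HL Lxy) h.
  by move=> h; apply: m2; apply: Ltr (Lsym HL Lxy) h.
case: (eqVneq y u) => [yu | yu].
  by subst y; apply: tri_case HL Hg ug xg zf n1 n2 n3.
case: (eqVneq z u) => [zu | zu].
  by subst z; apply: tri_case HL Hg ug xg yf n2 n1 (Lnsym HL n3).
by right; exists y, z; split => //; exact: inS1.
Qed.

Definition gb n (L : Zn n -> Prop) S x : bool :=
  if excluded_middle_informative (good L S x) then true else false.

Lemma gbE n (L : Zn n -> Prop) S x : gb L S x <-> good L S x.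
Proof. by rewrite /gb; case: excluded_middle_informative. Qed.

Lemma PhiL_trop n (L : Zn n -> Prop) : is_sublattice L -> is_tropical_ideal (PhiL L).
Proof.
move=> HL; split; first exact: PhiL_ideal.
move=> f g u Hf Hg uf ug.
pose S := (f `|` g) `\ u.
pose h := [fset x in S | gb L S x].
have hP x : x \in h <-> x \in S /\ good L S x.
  by rewrite /h !inE -gbE; split => [/andP[]|[-> ->]].
exists h; split; last split.
- move=> x /hP [xS [[y [yS yx Lxy]]|[y [z [yS zS h1 h2 h3]]]]].
    left; exists y; split => //; apply/hP; split => //.
    by left; exists x; split => //; [rewrite eq_sym|exact: Lsym].
  right; exists y, z; split => //; apply/hP; split => //.
    by right; exists x, z; split => //; exact: Lnsym.
  by right; exists x, y; split => //; exact: Lnsym.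
- apply/fsubsetP => x; rewrite in_fsetU !in_fsetD => /orP [/andP [xg xf]|/andP [xf xg]].
    apply/hP; split; last exact: elim_key.
    by apply: inS1 => //; rewrite eq_sym; exact: neq_notin xg ug.
  apply/hP; split.
    by apply: inS2 => //; rewrite eq_sym; exact: neq_notin xf uf.
  rewrite /S fsetUC; exact: elim_key.
- by apply/fsubsetP => x /hP [].
Qed.

Lemma card3 n (S : bpoly n) x y z : x \in S -> y \in S -> z \in S ->
  x != y -> x != z -> y != z -> (3 <= #|` S|)%N.
Proof.
move=> xS yS zS xy xz yz.
rewrite (cardfsD1 x) xS (cardfsD1 y) (cardfsD1 z).
by rewrite !in_fsetD1 yS zS eq_sym xy eq_sym yz eq_sym xz.
Qed.

Lemma pick_mem n (S : bpoly n) : (0 < #|` S|)%N -> exists x, x \in S.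
Proof.
case: (fset_0Vmem S) => [->|[x xS]]; first by rewrite cardfs0.
by exists x.
Qed.

Lemma pick3 n (S : bpoly n) : (3 <= #|` S|)%N -> exists x y z,
  [/\ x \in S, y \in S, z \in S, x != y & [/\ x != z & y != z]].
Proof.
move=> h.
have [x xS] : exists x, x \in S by apply: pick_mem; apply: leq_trans h.
move: h; rewrite (cardfsD1 x) xS add1n ltnS => h.
have [y yS] : exists y, y \in S `\ x by apply: pick_mem; apply: leq_trans h.
move: h; rewrite (cardfsD1 y) yS add1n ltnS => h.
have [z zS] : exists z, z \in S `\ x `\ y by apply: pick_mem; apply: leq_trans h.
move: yS zS; rewrite !in_fsetD1 => /andP [yx yS] /andP [zy /andP [zx zS]].
by exists x, y, z; split => //; [rewrite eq_sym|split; rewrite eq_sym].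
Qed.

Lemma pick2 n (S : bpoly n) : (2 <= #|` S|)%N -> exists x y,
  [/\ x \in S, y \in S & x != y].
Proof.
move=> h.
have [x xS] : exists x, x \in S by apply: pick_mem; apply: leq_trans h.
move: h; rewrite (cardfsD1 x) xS add1n ltnS => h.
have [y yS] : exists y, y \in S `\ x by apply: pick_mem; apply: leq_trans h.
move: yS; rewrite !in_fsetD1 => /andP [yx yS].
by exists x, y; split => //; rewrite eq_sym.
Qed.

Lemma pairPhi n (L : Zn n -> Prop) x y : is_sublattice L -> x != y -> L (x - y) ->
  PhiL L [fset x; y].
Proof.
move=> HL xy Lxy t; rewrite !inE => /orP [] /eqP ->.
  by left; exists y; split; rewrite ?inE ?eqxx ?orbT // eq_sym.
by left; exists x; split; rewrite ?inE ?eqxx ?orbT //; exact: Lsym.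
Qed.

Lemma triPhi n (L : Zn n -> Prop) x y z : is_sublattice L ->
  ~ L (x - y) -> ~ L (x - z) -> ~ L (y - z) -> PhiL L [fset x; y; z].
Proof.
move=> HL n1 n2 n3 t; rewrite !inE => /orP [/orP []|] /eqP ->.
- by right; exists y, z; split; rewrite ?inE ?eqxx ?orbT.
- by right; exists x, z; split; rewrite ?inE ?eqxx ?orbT //; exact: Lnsym.
- by right; exists x, y; split; rewrite ?inE ?eqxx ?orbT //; exact: Lnsym.
Qed.

Lemma pair_sub n (L : Zn n -> Prop) f a b : is_sublattice L -> PhiL L f ->
  f != fset0 -> f `<=` [fset a; b] -> L (a - b).
Proof.
move=> HL Hf f0 /fsubsetP fS.
have [x xf] : exists x, x \in f.
  by case: (fset_0Vmem f) f0 => [->|[x xf]]; [rewrite eqxx | exists x].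
have L0 := HL.1.
have hab t : t \in f -> t = a \/ t = b.
  by move=> /fS; rewrite !inE => /orP [] /eqP ->; [left|right].
case: (Hf x xf) => [[y [yf yx Lxy]]|[y [z [yf zf n1 n2 n3]]]].
  case: (hab _ xf) => ex; case: (hab _ yf) => ey; subst x y.
  - by rewrite eqxx in yx.
  - by [].
  - exact: Lsym.
  - by rewrite eqxx in yx.
case: (hab _ xf) => ex; case: (hab _ yf) => ey; case: (hab _ zf) => ez; subst x y z;
  exfalso; first [ (apply: n1; rewrite subrr; exact L0) | (apply: n2; rewrite subrr; exact L0)
   | (apply: n3; rewrite subrr; exact L0)].
Qed.

Lemma mem_nz n (f : bpoly n) x : x \in f -> f != fset0.
Proof. by move=> xf; apply/eqP => e; rewrite e inE in xf. Qed.

Lemma nz_mem n (f : bpoly n) : f != fset0 -> exists x, x \in f.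
Proof. by case: (fset_0Vmem f) => [->|[x xf]]; [rewrite eqxx | exists x]. Qed.

Lemma card2 n (S : bpoly n) x y : x \in S -> y \in S -> x != y -> (2 <= #|` S|)%N.
Proof.
move=> xS yS xy; rewrite (cardfsD1 x) xS (cardfsD1 y).
by rewrite !in_fsetD1 yS eq_sym xy.
Qed.

Lemma card_tri_le n (u v w : Zn n) : (#|` [fset u; v; w]| <= 3)%N.
Proof.
have := cardfsUI (u |` [fset v]) [fset w]; rewrite cardfs1.
have := cardfs2 u v. rewrite /= => ->. case: (u != v) => /=; lia.
Qed.

Lemma sub2 n (S : bpoly n) x y : x \in S -> y \in S -> [fset x; y] `<=` S.
Proof. by move=> xS yS; apply/fsubsetP => t; rewrite !inE => /orP [] /eqP ->. Qed.

Lemma sub3 n (S : bpoly n) x y z : x \in S -> y \in S -> z \in S -> [fset x; y; z] `<=` S.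
Proof. by move=> xS yS zS; apply/fsubsetP => t; rewrite !inE => /orP [/orP []|] /eqP ->. Qed.

Lemma PhiL_rank n (L : Zn n -> Prop) : is_proper_sublattice L -> matroid_rank (PhiL L) 2.
Proof.
move=> [HL [v nv]]; split.
  exists [fset 0; v]; split.
    move=> f Hf f0 fS; apply: nv; have := Lsym HL (pair_sub HL Hf f0 fS).
    by rewrite subr0.
  rewrite cardfs2; case: eqP => // e; exfalso; apply: nv; rewrite -e; exact: HL.1.
move=> S HS; rewrite leqNgt; apply/negP => /pick3 [x [y [z [xS yS zS xy [xz yz]]]]].
case: (classic (L (x - y))) => Lxy.
  by apply: (HS [fset x; y]); [exact: pairPhi| apply: (@mem_nz _ _ x); rewrite !inE eqxx | exact: sub2].
case: (classic (L (x - z))) => Lxz.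
  by apply: (HS [fset x; z]); [exact: pairPhi| apply: (@mem_nz _ _ x); rewrite !inE eqxx | exact: sub2].
case: (classic (L (y - z))) => Lyz.
  by apply: (HS [fset y; z]); [exact: pairPhi| apply: (@mem_nz _ _ y); rewrite !inE eqxx | exact: sub2].
by apply: (HS [fset x; y; z]); [exact: triPhi| apply: (@mem_nz _ _ x); rewrite !inE eqxx | exact: sub3].
Qed.

Lemma good_card2 n (L : Zn n -> Prop) g x : is_sublattice L -> x \in g -> good L g x ->
  (2 <= #|` g|)%N.
Proof.
move=> HL xg [[y [yg yx _]]|[y [z [yg zg n1 _ _]]]].
  exact: card2 yg xg yx.
exact: card2 xg yg (Lneq HL n1).
Qed.

Lemma PhiL_min n (L : Zn n -> Prop) : is_sublattice L ->
  forall f, min_support (PhiL L) f <-> lattice_circuit L f.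
Proof.
move=> HL f; split.
  move=> [Hf [f0 Hmin]]; have [x xf] := nz_mem f0.
  case: (Hf x xf) => [[y [yf yx Lxy]]|[y [z [yf zf n1 n2 n3]]]].
    left; exists x, y; split; first by rewrite eq_sym.
    split => //.
    symmetry; apply: Hmin.
    - by apply: pairPhi => //; rewrite eq_sym.
    - by apply: (@mem_nz _ _ x); rewrite !inE eqxx.
    - exact: sub2.
  right; exists x, y, z; split; first by split; exact: Lneq HL _.
  split => //.
  symmetry; apply: Hmin.
  - exact: triPhi.
  - by apply: (@mem_nz _ _ x); rewrite !inE eqxx.
  - exact: sub3.
case=> [[u [v [uv [Luv ->]]]]|[u [v [w [[uv uw vw] [[n1 n2 n3] ->]]]]]].
  split; first exact: pairPhi.
  split; first by apply: (@mem_nz _ _ u); rewrite !inE eqxx.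
  move=> g Hg g0 gS; apply/eqP; rewrite eqEfcard gS /= cardfs2 uv.
  have [x xg] := nz_mem g0; exact: good_card2 HL xg (Hg x xg).
split; first exact: triPhi.
split; first by apply: (@mem_nz _ _ u); rewrite !inE eqxx.
move=> g Hg g0 gS; apply/eqP; rewrite eqEfcard gS /=.
apply: leq_trans (card_tri_le u v w) _.
have hm t : t \in g -> t = u \/ t = v \/ t = w.
  by move/(fsubsetP gS); rewrite !inE => /orP [/orP []|] /eqP ->; auto.
have [x xg] := nz_mem g0.
case: (Hg x xg) => [[y [yg yx Lxy]]|[y [z [yg zg m1 m2 m3]]]].
  exfalso.
  case: (hm _ xg) => [ex|[ex|ex]]; case: (hm _ yg) => [ey|[ey|ey]]; subst x y;
  first [ by rewrite eqxx in yx | by apply: n1 | by apply: n2 | by apply: n3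
        | by apply: n1; apply: (Lsym HL) | by apply: n2; apply: (Lsym HL)
        | by apply: n3; apply: (Lsym HL) ].
apply: card3 xg yg zg _ _ _; apply: Lneq HL _; eassumption.
Qed.

Lemma PhiL_inj n (L1 L2 : Zn n -> Prop) : is_sublattice L1 -> is_sublattice L2 ->
  (forall f, PhiL L1 f <-> PhiL L2 f) -> forall v, L1 v -> L2 v.
Proof.
move=> H1 H2 E v Lv.
case: (eqVneq v 0) => [->|v0]; first exact: H2.1.
have : PhiL L1 [fset v; 0] by apply: pairPhi => //; rewrite subr0.
move/E => P2; have := pair_sub H2 P2 (@mem_nz _ _ v _) (fsubset_refl _).
by rewrite subr0; apply; rewrite !inE eqxx.
Qed.

Lemma memseq n (f : bpoly n) x : (x \in enum_fset f) = (x \in f).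
Proof. by []. Qed.

Section C.
Variable n : nat.
Variable I : bpoly n -> Prop.
Hypothesis HI : zero_dim_trop_ideal_deg I 2.

Let Iideal : is_ideal I := HI.1.1.
Let Ielim := HI.1.2.
Let Irk := HI.2.

Lemma bmul1_2 (c p q : Zn n) : bmul [fset c] [fset p; q] = [fset c + p; c + q].
Proof.
apply/fsetP => t; apply/idP/idP.
  move=> /bmulP [a [b [ac bpq ->]]]; move: ac bpq; rewrite !inE => /eqP -> /orP [] /eqP ->;
  by rewrite eqxx ?orbT.
rewrite !inE => /orP [] /eqP ->; apply: mem_bmul; by rewrite !inE eqxx ?orbT.
Qed.

Lemma bmul1_1 (c p : Zn n) : bmul [fset c] [fset p] = [fset c + p].
Proof.
apply/fsetP => t; apply/idP/idP.
  by move=> /bmulP [a [b [ac bpq ->]]]; move: ac bpq; rewrite !inE => /eqP -> /eqP ->.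
by rewrite !inE => /eqP ->; apply: mem_bmul; rewrite !inE eqxx.
Qed.

Lemma tr2 c p q : I [fset p; q] -> I [fset c + p; c + q].
Proof. by move=> h; rewrite -bmul1_2; apply: Iideal.2.2. Qed.

Lemma tr1 c p : I [fset p] -> I [fset c + p].
Proof. by move=> h; rewrite -bmul1_1; apply: Iideal.2.2. Qed.

Lemma noSing a : ~ I [fset a].
Proof.
move=> Ia; have [[S [indS cS]] _] := Irk.
have [b bS] : exists b, b \in S by apply: pick_mem; rewrite cS.
have := tr1 (b - a) Ia; rewrite subrK => Ib.
apply: (indS _ Ib).
  by apply: (@mem_nz _ _ b); rewrite inE.
by apply/fsubsetP => t; rewrite inE => /eqP ->.
Qed.

Definition LI (v : Zn n) : Prop := v = 0 \/ I [fset v; 0].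

Lemma RL x y : LI (x - y) <-> x = y \/ I [fset x; y].
Proof.
split.
  case=> [/eqP|h]; first by rewrite subr_eq0 => /eqP ->; left.
  by right; have := tr2 y h; rewrite addr0 addrC subrK.
case=> [->|h]; first by left; rewrite subrr.
by right; have := tr2 (- y) h; rewrite addNr addrC.
Qed.

Lemma Rsym x y : x = y \/ I [fset x; y] -> y = x \/ I [fset y; x].
Proof. by case=> [->|h]; [left | right; rewrite fsetUC]. Qed.

Lemma Rtrans x y z : x = y \/ I [fset x; y] -> y = z \/ I [fset y; z] ->
  x = z \/ I [fset x; z].
Proof.
case=> [->//|hxy]; case=> [<-|hyz]; first by right.
case: (eqVneq x y) => [->|xy]; first by right.
case: (eqVneq y z) => [<-|yz]; first by right.
case: (eqVneq x z) => [->|xz]; first by left.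
have yf : y \in [fset x; y] by rewrite !inE eqxx orbT.
have yg : y \in [fset y; z] by rewrite !inE eqxx.
have [h [Ih [h1 h2]]] := Ielim hxy hyz yf yg.
right; suff -> : [fset x; z] = h by [].
apply/eqP; rewrite eqEfsubset; apply/andP; split.
  apply: sub2; apply: (fsubsetP h1); rewrite !inE ?eqxx ?orbT /=.
    by rewrite (negbTE xy) (negbTE xz).
  by rewrite eq_sym (negbTE xz) eq_sym (negbTE yz).
apply/fsubsetP => t /(fsubsetP h2); rewrite !inE => /andP [ty].
by rewrite (negbTE ty) /= ?orbF => /orP [] ->; rewrite ?orbT.
Qed.

Lemma LI_sub : is_sublattice LI.
Proof.
split; first by left.
move=> u v Lu Lv; apply/RL; apply: (@Rtrans _ 0).
  by apply/RL; rewrite subr0.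
by apply: Rsym; apply/RL; rewrite subr0.
Qed.

Lemma LI_proper : is_proper_sublattice LI.
Proof.
split; first exact: LI_sub.
have [[S [indS cS]] _] := Irk.
have [a [b [aS bS ab]]] : exists a b, [/\ a \in S, b \in S & a != b] by apply: pick2; rewrite cS.
exists (a - b) => /RL [e|h]; first by rewrite e eqxx in ab.
apply: (indS _ h); last exact: sub2.
by apply: (@mem_nz _ _ a); rewrite !inE eqxx.
Qed.

Lemma eq_sym_neq_tmp (a b : Zn n) : a != b -> b != a.
Proof. by rewrite eq_sym. Qed.

Lemma noiso x : forall k g, (#|` g| <= k)%N -> I g -> x \in g ->
  (forall y, y \in g -> y != x -> ~ I [fset x; y]) ->
  (forall y z, y \in g -> z \in g -> y != x -> z != x -> y != z -> I [fset y; z]) -> False.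
Proof.
elim=> [|k IH] g cg Ig xg H1 H2.
  by move: cg; rewrite (cardfsD1 x) xg.
case: (classic (exists y, y \in g /\ y != x)) => [[y [yg yx]]|noy].
  case: (classic (exists z, [/\ z \in g, z != x & z != y])) => [[z [zg zx zy]]|noz].
    have Iyz := H2 y z yg zg yx zx (eq_sym_neq_tmp zy).
    have zf : z \in [fset y; z] by rewrite !inE eqxx orbT.
    have [h [Ih [h1 h2]]] := Ielim Ig Iyz zg zf.
    have hsub : forall t, t \in h -> t \in g /\ t != z.
      move=> t /(fsubsetP h2); rewrite in_fsetD1 in_fsetU !inE => /andP [tz].
      rewrite tz; case/orP => [->//|/orP [] /eqP e]; first by subst t.
      by rewrite e eqxx in tz.
    have xh : x \in h.
      apply: (fsubsetP h1); rewrite in_fsetU in_fsetD xg !inE.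
      by rewrite eq_sym (negbTE yx) eq_sym (negbTE zx).
    apply: (IH h) => //.
    - have : (#|` h| <= #|` g `\ z|)%N.
        apply: fsubset_leq_card; apply/fsubsetP => t /hsub [tg tz].
        by rewrite in_fsetD1 tz tg.
      move: cg; rewrite (cardfsD1 z) zg add1n ltnS => cg c2.
      exact: leq_trans c2 cg.
    - by move=> t /hsub [tg _]; apply: H1.
    - by move=> t u /hsub [tg _] /hsub [ug _]; apply: H2.
  apply: (H1 y yg yx).
  have -> : [fset x; y] = g; last by [].
  apply/eqP; rewrite eqEfsubset (sub2 xg yg) /=.
  apply/fsubsetP => t tg; rewrite !inE.
  case: (eqVneq t x) => //= tx; case: (eqVneq t y) => //= ty.
  by exfalso; apply: noz; exists t; split.
apply: (@noSing x).
have -> : [fset x] = g; last by [].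
apply/eqP; rewrite eqEfsubset; apply/andP; split.
  by apply/fsubsetP => t; rewrite inE => /eqP ->.
apply/fsubsetP => t tg; rewrite inE.
case: (eqVneq t x) => //= tx.
by exfalso; apply: noy; exists t; split.
Qed.

Lemma I_Phi f : I f -> PhiL LI f.
Proof.
move=> If x xf; apply: NNPP => ng.
apply: (@noiso x #|` f| f) => //.
  move=> y yf yx Ixy; apply ng; left; exists y; split => //.
  by apply/RL; right.
move=> y z yf zf yx zx yz; apply: NNPP => nyz; apply ng; right; exists y, z; split => //.
- by move=> /RL [e|h]; [rewrite e eqxx in yx | apply ng; left; exists y; split => //; apply/RL; right].
- by move=> /RL [e|h]; [rewrite e eqxx in zx | apply ng; left; exists z; split => //; apply/RL; right].
- by move=> /RL [e|h]; [rewrite e eqxx in yz | apply: nyz].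
Qed.

Lemma single g c : I g -> g != fset0 -> (forall t, t \in g -> t = c) -> False.
Proof.
move=> Ig g0 H; apply: (@noSing c).
have [x xg] := nz_mem g0.
have -> : [fset c] = g; last by [].
apply/eqP; rewrite eqEfsubset; apply/andP; split.
  by apply/fsubsetP => t; rewrite inE => /eqP ->; rewrite -(H x xg).
by apply/fsubsetP => t /H ->; rewrite inE.
Qed.

Lemma sub_pair_I g b c : I g -> g != fset0 -> (forall t, t \in g -> t = b \/ t = c) ->
  b != c -> I [fset b; c].
Proof.
move=> Ig g0 H bc.
case: (boolP (b \in g)) => bg; last first.
  exfalso; apply: (single Ig g0 (c := c)) => t tg.
  by case: (H t tg) => // e; subst t; rewrite tg in bg.
case: (boolP (c \in g)) => cg; last first.
  exfalso; apply: (single Ig g0 (c := b)) => t tg.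
  by case: (H t tg) => // e; subst t; rewrite tg in cg.
have -> : [fset b; c] = g; last by [].
apply/eqP; rewrite eqEfsubset (sub2 bg cg) /=.
by apply/fsubsetP => t /H [] ->; rewrite !inE eqxx ?orbT.
Qed.

Lemma tri_mem g a b c : I g -> g != fset0 ->
  (forall t, t \in g -> t = a \/ t = b \/ t = c) -> b != c -> ~ I [fset b; c] -> a \in g.
Proof.
move=> Ig g0 H bc nI; apply: NNPP => /negP ag; apply: nI.
apply: (sub_pair_I Ig g0) => // t tg.
by case: (H t tg) => [e|//]; subst t; rewrite tg in ag.
Qed.

Lemma tri_I x y z : ~ LI (x - y) -> ~ LI (x - z) -> ~ LI (y - z) -> I [fset x; y; z].
Proof.
move=> n1 n2 n3.
have xy := Lneq LI_sub n1; have xz := Lneq LI_sub n2; have yz := Lneq LI_sub n3.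
have nI a b : ~ LI (a - b) -> ~ I [fset a; b] by move=> h hI; apply: h; apply/RL; right.
have ni : ~ indep I [fset x; y; z].
  move=> H; have := Irk.2 _ H.
  have := @card3 _ [fset x; y; z] x y z.
  rewrite !inE !eqxx ?orbT /= => /(_ isT isT isT xy xz yz) c3 c2.
  by have := leq_trans c3 c2.
have [g [Ig [g0 gS]]] : exists g, I g /\ g != fset0 /\ g `<=` [fset x; y; z].
  apply: NNPP => H; apply: ni => g Ig g0 gS; apply: H; exists g; split => //.
have hm t : t \in g -> t = x \/ t = y \/ t = z.
  by move/(fsubsetP gS); rewrite !inE => /orP [/orP []|] /eqP ->; auto.
have xg : x \in g by apply: (tri_mem Ig g0 hm yz (nI _ _ n3)).
have yg : y \in g.
  apply: (tri_mem (b := x) (c := z) Ig g0) => //.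
    by move=> t /hm; tauto.
  by apply: nI.
have zg : z \in g.
  apply: (tri_mem (b := x) (c := y) Ig g0) => //.
    by move=> t /hm; tauto.
  by apply: nI.
have -> : [fset x; y; z] = g; last by [].
by apply/eqP; rewrite eqEfsubset gS sub3.
Qed.

Lemma Phi_I f : PhiL LI f -> I f.
Proof.
move=> Hf.
have cov x : x \in f -> exists c, [/\ I c, x \in c & c `<=` f].
  move=> xf; case: (Hf x xf) => [[y [yf yx Lxy]]|[y [z [yf zf n1 n2 n3]]]].
    exists [fset x; y]; split; [|by rewrite !inE eqxx|exact: sub2].
    by case/RL: Lxy => // e; rewrite e eqxx in yx.
  exists [fset x; y; z]; split; [exact: tri_I|by rewrite !inE eqxx|exact: sub3].
have main (s : seq (Zn n)) : {subset s <= f} -> exists h, [/\ I h, {subset s <= h} & h `<=` f].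
  elim: s => [|x s IH] sf.
    by exists fset0; split; [exact: Iideal.1| |exact: fsub0set].
  have [h [Ih sh hf]] : exists h, [/\ I h, {subset s <= h} & h `<=` f].
    by apply: IH => t ts; apply: sf; rewrite inE ts orbT.
  have [c [Ic xc cf]] := cov x (sf x (mem_head _ _)).
  exists (h `|` c); split.
  - exact: Iideal.2.1.
  - move=> t; rewrite inE in_fsetU => /orP [/eqP ->|ts]; first by rewrite xc orbT.
    by rewrite sh.
  - by rewrite fsubUset hf cf.
have [h [Ih fh hf]] := main (enum_fset f) (fun t => id).
have -> : f = h; last by [].
apply/eqP; rewrite eqEfsubset hf andbT; apply/fsubsetP => t tf; apply: fh; exact: tf.
Qed.
End C.

Theorem mainTheorem5 (n : nat) :
  exists Phi : (Zn n -> Prop) -> (bpoly n -> Prop),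
    (forall L, is_proper_sublattice L ->
       zero_dim_trop_ideal_deg (Phi L) 2 /\
       (forall f, min_support (Phi L) f <-> lattice_circuit L f)) /\
    (forall L1 L2, is_proper_sublattice L1 -> is_proper_sublattice L2 ->
       (forall f, Phi L1 f <-> Phi L2 f) -> forall v, L1 v <-> L2 v) /\
    (forall I, zero_dim_trop_ideal_deg I 2 ->
       exists L, is_proper_sublattice L /\ forall f, Phi L f <-> I f).
Proof.
exists (@PhiL n); split; last split.
- move=> L HL; split; first split.
  + exact: PhiL_trop HL.1.
  + exact: PhiL_rank.
  + exact: PhiL_min HL.1.
- move=> L1 L2 H1 H2 E v.
  have E' : forall f, PhiL L2 f <-> PhiL L1 f by move=> f; exact: iff_sym (E f).
  have h1 := @PhiL_inj _ _ _ H1.1 H2.1 E v.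
  have h2 := @PhiL_inj _ _ _ H2.1 H1.1 E' v.
  by split.
- move=> I HI; exists (LI I); split; first exact: LI_proper.
  by move=> f; split; [exact: Phi_I | exact: I_Phi].
Qed.
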